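(* Let $P$ and $Q$ be $[0,1]$-valued random variables, where under the null hypothesis $H_0$, $P$ is a valid p-value ($\Pr(P\le s)\le s$ for all $s\in[0,1]$) and $Q$ has density $f$ on $[0,1]$. Let $\ell_f := \inf_{q \in [0,1]} f(q)$ and $\eta \in [0,1]$. Let $T\in\{0,1\}$ be such that, conditionally on $(Q,P)$, $T \sim \mathrm{Bern}\big(1 - \eta \ell_f / f(Q)\big)$, and define $$\tilde P^{\mathrm{density}} := T\,P + (1-T)\,Q.$$ Then, under $H_0$, for every $s\in[0,1]$, $$\Pr(\tilde P^{\mathrm{density}} \le s) = \Pr(P \le s) + \eta \ell_f\Big(s - \int_0^1 \Pr(P \le s \mid Q = q)\, dq\Big).$$ Consequently, when $P$ and $Q$ are independent, $\tilde P^{\mathrm{density}}$ is a valid p-value, and it is exactly $\mathrm{Uniform}[0,1]$ if $P$ is exactly $\mathrm{Uniform}[0,1]$, regardless of the distribution of $Q$.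
   Context: $T$ is drawn based on $Q$ using additional independent randomness. $Q$ is a ''proxy'' p-value with no validity assumption; its null density $f$ is assumed known. *)

(* Defs.v *)
From mathcomp Require Import all_boot all_order all_algebra.
From mathcomp Require Import all_classical all_reals all_analysis.
Set Implicit Arguments. Unset Strict Implicit. Unset Printing Implicit Defensive.
Import Order.TTheory GRing.Theory Num.Theory.
Local Open Scope classical_set_scope.
Local Open Scope ring_scope.

Section defs.
Context {R : realType} {d : measure_display} {Omega : measurableType d}.

Definition prob_le (Pr : probability Omega R) (X : Omega -> R) (s : R) : \bar R :=
  Pr [set w | X w <= s].

Definition valid_pvalue (Pr : probability Omega R) (X : Omega -> R) : Prop :=
  forall s : R, 0 <= s <= 1 -> (prob_le Pr X s <= s%:E)%E.

(* exactly Uniform[0,1] (X being [0,1]-valued): Pr(X <= s) = s on [0,1] *)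
Definition uniform01 (Pr : probability Omega R) (X : Omega -> R) : Prop :=
  forall s : R, 0 <= s <= 1 -> prob_le Pr X s = s%:E.

Definition indep_rv (Pr : probability Omega R) (X Y : Omega -> R) : Prop :=
  forall A B : set R, measurable A -> measurable B ->
    Pr (X @^-1` A `&` Y @^-1` B) = (Pr (X @^-1` A) * Pr (Y @^-1` B))%E.

Definition ptilde_density (T P Q : Omega -> R) : Omega -> R :=
  fun w => T w * P w + (1 - T w) * Q w.
End defs.

Definition ell_f {R : realType} (f : R -> R) : R :=
  inf [set f q | q in `[0%R, 1%R]].

(* Main.v *)
Require Import Defs.
From mathcomp Require Import all_boot all_order all_algebra.
From mathcomp Require Import all_classical all_reals all_analysis.
From mathcomp Require Import measurable_realfun.
From mathcomp Require Import ring lra.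
Import Order.TTheory GRing.Theory Num.Theory.
Local Open Scope classical_set_scope.
Local Open Scope ring_scope.

Lemma measurable_inv (R : realType) : measurable_fun setT (@GRing.inv R).
Proof.
have -> : [set: R] = [set 0] `|` ~` [set 0] by rewrite setUv.
apply/measurable_funU => //; first exact: measurableC.
split; first exact: measurable_fun_set1.
apply: measurable_realfun.open_continuous_measurable_fun.
  exact/closed_openC/accessible_closed_set1/hausdorff_accessible/Rhausdorff.
move=> x; rewrite inE /= => /eqP x0; exact: inv_continuous.
Qed.

Section dens.
Local Open Scope ereal_scope.
Import HBNNSimple.
Lemma dens_change d (T : measurableType d) (R : realType)
  (nu mu : {measure set T -> \bar R}) (g : T -> \bar R)
  (g0 : forall x, 0 <= g x) (gfin : forall x, g x \is a fin_num)
  (mg : measurable_fun setT g)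
  (nug : forall A, measurable A -> nu A = \int[mu]_(x in A) g x)
  (f : T -> \bar R) (f0 : forall x, 0 <= f x) (mf : measurable_fun setT f) :
  \int[nu]_x f x = \int[mu]_x (f x * g x).
Proof.
pose E := [set: T]; have mE : measurable E := measurableT.
change (\int[nu]_(x in E) f x = \int[mu]_(x in E) (f x * g x)).
pose h := nnsfun_approx mE mf.
have -> : \int[nu]_(x in E) f x =
    lim (\int[nu]_(x in E) (EFin \o h n) x @[n --> \oo]).
  have fE x : E x -> f x = lim ((EFin \o h n) x @[n --> \oo]).
    by move=> Ex; apply/esym/cvg_lim => //; exact: cvg_nnsfun_approx.
  under eq_integral => x /[!inE] /fE -> //.
  apply: monotone_convergence => //.
  - move=> n; apply/measurable_EFinP.
    by apply: (measurable_funS measurableT) => //; exact/measurable_funP.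
  - by move=> n x Ex //=; rewrite lee_fin.
  - by move=> x Ex a b ab; rewrite lee_fin; exact/lefP/nd_nnsfun_approx.
have -> : \int[mu]_(x in E) (f \* g) x =
    lim (\int[mu]_(x in E) ((EFin \o h n) \* g) x @[n --> \oo]).
  have fg x : E x -> f x * g x = lim (((EFin \o h n) \* g) x @[n --> \oo]).
    by move=> Ex; apply/esym/cvg_lim => //; apply: cvgeZr;
      [exact: gfin|exact: cvg_nnsfun_approx].
  under eq_integral => x /[!inE] /fg -> //.
  apply: monotone_convergence => [//| | |].
  - move=> n; apply/emeasurable_funM => //.
    by apply/measurable_EFinP; exact: measurable_funP.
  - by move=> n x Ex /=; rewrite mule_ge0 ?lee_fin ?g0.
  - by move=> x Ex a b ab/=; rewrite lee_wpmul2r ?lee_fin ?g0//; exact/lefP/nd_nnsfun_approx.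
suff suf n : \int[mu]_(x in E) ((EFin \o h n) x * g x) =
    \int[nu]_(x in E) (EFin \o h n) x.
  by congr (limn _); apply/funext => n; rewrite suf.
transitivity (\int[nu]_(x in E)
   (\sum_(y \in range (h n)) (y * \1_(h n @^-1` [set y]) x)%:E)); last first.
  by apply: eq_integral => t tE; rewrite /= fimfunE -fsumEFin.
have indich m r : measurable_fun E (fun x => (r * \1_(h m @^-1` [set r]) x)%:E).
  by apply: (measurable_comp measurableT) => //; exact: measurable_funM.
rewrite ge0_integral_fsum//; last by move=> m y Ey; exact: nnfun_muleindic_ge0.
transitivity (\int[mu]_(x in E) (\sum_(y \in range (h n))
    (y * \1_(h n @^-1` [set y]) x)%:E * g x)).
  under [RHS]eq_integral => x xE.
    rewrite -ge0_mule_fsuml => [|y]; last exact: nnfun_muleindic_ge0.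
    rewrite fsumEFin // -(fimfunE _ x); over.
  by [].
rewrite ge0_integral_fsum//; last 2 first.
  - move=> y; apply: emeasurable_funM => //.
  - by move=> m y Ey; rewrite mule_ge0 ?g0// nnfun_muleindic_ge0.
apply: eq_fsbigr => r rhn.
under [RHS]eq_integral do rewrite EFinM.
rewrite integralZl_indic_nnsfun => //.
under eq_integral do rewrite EFinM -muleA.
rewrite ge0_integralZl//.
- under eq_integral do rewrite muleC.
  rewrite (eq_integral (g \_ (h n @^-1` [set r]))); last first.
    by move=> x xE; rewrite epatch_indic.
  rewrite /E -integral_mkcond integral_indic// setIT -nug//.
- apply: emeasurable_funM; first exact/measurable_EFinP.
  exact: mg.
- by move=> t Et; rewrite mule_ge0 ?lee_fin ?g0.
- by move: rhn; rewrite inE => -[t _ <-]; rewrite lee_fin.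
Qed.
End dens.

Section KLs.
Local Open Scope ereal_scope.
Lemma KL (R : realType) d (Omega : measurableType d) (Pr : probability Omega R)
 (Q : Omega -> R) (mQ : measurable_fun setT Q) (Q01 : forall w, (0 <= Q w <= 1)%R)
 (f : R -> R) (mf : measurable_fun setT f)
 (f_ge0 : forall q, (0 <= q <= 1)%R -> (0 <= f q)%R)
 (c : R) (c0 : (0 <= c)%R) (cpos : c != 0%R -> forall q, (0 <= q <= 1)%R -> (0 < f q)%R)
 (D : set Omega) (mD : measurable D)
 (k : R -> \bar R) (k0 : forall q, 0 <= k q) (kfin : forall q, k q \is a fin_num)
 (mk : measurable_fun setT k)
 (H : forall A, measurable A -> Pr (Q @^-1` A `&` D) =
    \int[lebesgue_measure]_(q in A `&` `[0%R, 1%R]) ((f q)%:E * k q)) :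
 \int[Pr]_(w in D) (c / f (Q w))%:E =
   c%:E * \int[lebesgue_measure]_(q in `[0%R, 1%R]) k q.
Proof.
pose phi0 q := (c / `|f q|)%:E.
have mphi0 : measurable_fun setT phi0.
  apply/measurable_EFinP.
  apply: measurable_funM => //.
  apply: measurableT_comp; first exact: measurable_inv.
  by apply: measurableT_comp; first exact: normr_measurable.
have phi0_ge0 q : 0 <= phi0 q by rewrite lee_fin divr_ge0.
transitivity (\int[Pr]_(w in D) phi0 (Q w)).
  apply: eq_integral => w _; rewrite /phi0 ger0_norm //; exact: f_ge0.
transitivity (\int[mrestr Pr mD]_w phi0 (Q w)).
  rewrite (@dens_change _ Omega R (mrestr Pr mD) Pr (EFin \o \1_D)); first last.
  - exact: measurableT_comp mphi0 mQ.
  - by move=> x; exact: phi0_ge0.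
  - move=> A mA; rewrite /mrestr integral_indic// setIC //.
  - by apply/measurable_EFinP; exact: measurable_indic.
  - by move=> x.
  - by move=> x; rewrite /= lee_fin.
  by rewrite (integral_mkcond D) epatch_indic.
pose pm := (pushforward (mrestr Pr mD) (Q : Omega -> measurableTypeR R) : measure (measurableTypeR R) R).
transitivity (\int[pm mQ]_y phi0 y).
  rewrite ge0_integral_pushforward //.
pose I01 := `[0%R, 1%R]%classic : set R.
have mI01 : measurable I01 by exact: measurable_itv.
pose g q := (`|f q|)%:E * k q * (\1_I01 q)%:E.
rewrite (@dens_change _ (measurableTypeR R) R (pm mQ) lebesgue_measure g); first last.
- exact: mphi0.
- exact: phi0_ge0.
- move=> A mA; rewrite /= /pushforward /mrestr H // integral_mkcondr.
  apply: eq_integral => q _; rewrite /g patchE indicE.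
  case: ifPn => qI; last by rewrite /= mule0.
  rewrite /= mule1 ger0_norm //; apply: f_ge0.
  by move: qI; rewrite inE /I01 /= in_itv /=.
- apply: emeasurable_funM; last by apply/measurable_EFinP; exact: measurable_indic.
  apply: emeasurable_funM => //; apply/measurable_EFinP.
  by apply: measurableT_comp; first exact: normr_measurable.
- move=> q; rewrite /g fin_numM // fin_numM //.
- move=> q; rewrite /g mule_ge0 // ?lee_fin // mule_ge0 // lee_fin //.
transitivity (\int[lebesgue_measure]_(q in I01) (c%:E * k q)); last first.
  by rewrite ge0_integralZl //; exact: measurable_funS mk.
rewrite [RHS]integral_mkcond; apply: eq_integral => q _.
rewrite /g /phi0 patchE indicE.
case: ifPn => qI; last by rewrite /= !mule0.
rewrite /= mule1 -(fineK (kfin q)) -!EFinM; congr EFin.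
have [->|c0'] := eqVneq c 0%R; first by rewrite !mul0r.
have fq : (0 < f q)%R.
  by apply: cpos => //; move: qI; rewrite inE /I01 /= in_itv /=.
rewrite ger0_norm ?ltW // mulrA divfK //; exact: lt0r_neq0.
Qed.
End KLs.

Lemma leb0s (R : realType) (s : R) (s0 : (0 <= s)%R) :
  (lebesgue_measure (`[0%R, s]%classic : set R) = s%:E)%E.
Proof.
rewrite lebesgue_measure_itv /=.
rewrite lte_fin oppr0 adde0; case: ifPn => //; rewrite -leNgt => ss.
by have -> : s = 0%R by apply/le_anti; rewrite ss s0.
Qed.

Theorem proposition3 (R : realType) (d : measure_display) (Omega : measurableType d)
  (Pr : probability Omega R) (P Q T : Omega -> R)
  (f : R -> R) (kappa : R.-pker R ~> R) (eta : R)
  (mP : measurable_fun setT P) (mQ : measurable_fun setT Q)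
  (mT : measurable_fun setT T)
  (P01 : forall w, 0 <= P w <= 1) (Q01 : forall w, 0 <= Q w <= 1)
  (T01 : forall w, T w = 0 \/ T w = 1)
  (* H0: P is a valid p-value *)
  (HPvalid : valid_pvalue Pr P)
  (* H0: Q has density f on [0,1] *)
  (mf : measurable_fun setT f)
  (f_ge0 : forall q, 0 <= q <= 1 -> 0 <= f q)
  (Qdens : forall A : set R, measurable A ->
     Pr (Q @^-1` A) = (\int[lebesgue_measure]_(q in A `&` `[0%R, 1%R]) (f q)%:E)%E)
  (* kappa q = conditional law of P given Q = q *)
  (Hcond : forall A B : set R, measurable A -> measurable B ->
     Pr (Q @^-1` A `&` P @^-1` B) =
       (\int[lebesgue_measure]_(q in A `&` `[0%R, 1%R]) ((f q)%:E * kappa q B))%E)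
  (eta01 : 0 <= eta <= 1)
  (* conditionally on (Q,P), T ~ Bern(1 - eta * ell_f / f(Q)) *)
  (HT : forall C : set (R * R)%type, measurable C ->
     Pr ([set w | C (Q w, P w)] `&` [set w | T w = 1]) =
       (\int[Pr]_(w in [set w | C (Q w, P w)])
          (1 - eta * ell_f f / f (Q w))%:E)%E) :
  (forall s : R, 0 <= s <= 1 ->
     prob_le Pr (ptilde_density T P Q) s =
       (prob_le Pr P s + (eta * ell_f f)%:E *
          (s%:E - \int[lebesgue_measure]_(q in `[0%R, 1%R]) kappa q `]-oo, s%R]%classic))%E)
  /\ (indep_rv Pr P Q -> valid_pvalue Pr (ptilde_density T P Q))
  /\ (indep_rv Pr P Q -> uniform01 Pr P -> uniform01 Pr (ptilde_density T P Q)).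
Proof.
have mpre (X : Omega -> R) (mX : measurable_fun setT X) (B : set R) :
    measurable B -> measurable (X @^-1` B).
  by move=> mB; rewrite -[X @^-1` B]setTI; exact: mX.
pose c := eta * ell_f f.
pose S := [set f q | q in `[0%R, 1%R]].
have neS : S !=set0.
  by exists (f 0), 0 => //=; rewrite in_itv /= lexx ler01.
have lbS : lbound S 0.
  by move=> _ [q qI <-]; apply: f_ge0; move: qI; rewrite /= in_itv.
have ell0 : 0 <= ell_f f := lb_le_inf neS lbS.
have ellf q : 0 <= q <= 1 -> ell_f f <= f q.
  by move=> q01; apply: (ge_inf (ex_intro _ 0 lbS)); exists q => //=; rewrite in_itv.
have [eta0 eta1] := andP eta01.
have c0 : 0 <= c by rewrite mulr_ge0.
have cpos : c != 0 -> forall q, 0 <= q <= 1 -> 0 < f q.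
  move=> cn0 q q01; apply: (lt_le_trans _ (ellf q q01)).
  rewrite lt_neqAle ell0 andbT eq_sym; apply: contra cn0 => /eqP e0.
  by rewrite /c e0 mulr0.
have phi_ge0 w : 0 <= c / f (Q w) by rewrite divr_ge0 // f_ge0.
have phi_le1 w : c / f (Q w) <= 1.
  have [->|cn0] := eqVneq c 0; first by rewrite mul0r.
  have fq := cpos cn0 _ (Q01 w).
  rewrite ler_pdivrMr // mul1r.
  have := ellf _ (Q01 w); rewrite /c; nra.
have mphi : measurable_fun setT (fun w => (c / f (Q w))%:E).
  apply/measurable_EFinP; apply: measurable_funM => //.
  apply: measurableT_comp; first exact: measurable_inv.
  exact: measurableT_comp mf mQ.
have mphiR : measurable_fun setT (fun w => c / f (Q w)).
  by apply/measurable_EFinP.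
have mphi1 : measurable_fun setT (fun w => (1 - c / f (Q w))%:E).
  apply/measurable_EFinP; apply: measurable_funD => //.
  exact: measurable_funN.
have PXfin (X : set Omega) : measurable X -> Pr X \is a fin_num.
  by move=> mX; exact: fin_num_measure.
have split1 (X : set Omega) : measurable X ->
   Pr X = (\int[Pr]_(w in X) (1 - c / f (Q w))%:E +
           \int[Pr]_(w in X) (c / f (Q w))%:E)%E.
  move=> mX.
  transitivity (\int[Pr]_(w in X) ((1 - c / f (Q w))%:E + (c / f (Q w))%:E))%E; last first.
    apply: ge0_integralD => //.
    - by move=> w _; rewrite lee_fin subr_ge0.
    - exact: measurable_funS mphi1.
    - by move=> w _; rewrite lee_fin.
    - exact: measurable_funS mphi.
  under eq_integral do rewrite -EFinD subrK.
  by rewrite integral_cst // mul1e.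
have Ige0 (X : set Omega) : (0 <= \int[Pr]_(w in X) (c / f (Q w))%:E)%E.
  by apply: integral_ge0 => w _; rewrite lee_fin.
have I1ge0 (X : set Omega) : (0 <= \int[Pr]_(w in X) (1 - c / f (Q w))%:E)%E.
  by apply: integral_ge0 => w _; rewrite lee_fin subr_ge0.
have Ifin (X : set Omega) : measurable X ->
    (\int[Pr]_(w in X) (c / f (Q w))%:E)%E \is a fin_num.
  move=> mX; rewrite ge0_fin_numE //; apply: (@le_lt_trans _ _ (Pr X)).
    by rewrite [leRHS](split1 X mX) lee_paddl.
  by rewrite -ge0_fin_numE // PXfin.
have I1fin (X : set Omega) : measurable X ->
    (\int[Pr]_(w in X) (1 - c / f (Q w))%:E)%E \is a fin_num.
  move=> mX; rewrite ge0_fin_numE //; apply: (@le_lt_trans _ _ (Pr X)).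
    by rewrite [leRHS](split1 X mX) addeC lee_paddl.
  by rewrite -ge0_fin_numE // PXfin.
have PXlt (X : set Omega) : measurable X -> (Pr X < +oo)%E.
  by move=> mX; rewrite -ge0_fin_numE ?PXfin.
have key (s : R) :
  prob_le Pr (ptilde_density T P Q) s =
   (Pr (P @^-1` `]-oo, s]%classic)
    - \int[Pr]_(w in P @^-1` `]-oo, s]%classic) (c / f (Q w))%:E
    + \int[Pr]_(w in Q @^-1` `]-oo, s]%classic) (c / f (Q w))%:E)%E.
  set D := P @^-1` _; set G := Q @^-1` _; pose E1 := [set w | T w = 1].
  have mD : measurable D by apply: mpre => //; exact: measurable_itv.
  have mG : measurable G by apply: mpre => //; exact: measurable_itv.
  have mE1 : measurable E1 by apply: (mpre T mT [set 1]).
  have hD : Pr (D `&` E1) = (\int[Pr]_(w in D) (1 - c / f (Q w))%:E)%E.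
    have := HT (setT `*` `]-oo, s]%classic) (measurableX measurableT (measurable_itv _)).
    have -> : [set w | (setT `*` `]-oo, s]%classic) (Q w, P w)] = D.
      by apply/seteqP; split => w /=; [case | move=> ?; split].
    by move=> ->.
  have hG : Pr (G `&` E1) = (\int[Pr]_(w in G) (1 - c / f (Q w))%:E)%E.
    have := HT (`]-oo, s]%classic `*` setT) (measurableX (measurable_itv _) measurableT).
    have -> : [set w | (`]-oo, s]%classic `*` setT) (Q w, P w)] = G.
      by apply/seteqP; split => w /=; [case | move=> ?; split].
    by move=> ->.
  rewrite /prob_le.
  have -> : [set w | ptilde_density T P Q w <= s] = (D `&` E1) `|` (G `\` E1).
    apply/seteqP; split => w /=.
    - rewrite /ptilde_density; case: (T01 w) => Tw; rewrite Tw.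
      + rewrite mul0r add0r subr0 mul1r => Qs; right; split.
          by rewrite /G /= in_itv.
        by rewrite /E1 /= Tw => /esym/eqP; rewrite oner_eq0.
      + rewrite mul1r subrr mul0r addr0 => Ps; left; split => //.
    - rewrite /ptilde_density /E1 /D /G /= !in_itv /=.
      case=> [[Ps Tw]|[Qs Tw]].
        by rewrite Tw mul1r subrr mul0r addr0.
      case: (T01 w) => Tw'; last by [].
      by rewrite Tw' mul0r add0r subr0 mul1r.
  rewrite /prob_le.
  rewrite measureU; first last.
  - by apply/seteqP; split => w //= [[_ ?] [_ ?]].
  - exact: measurableD.
  - exact: measurableI.
  rewrite measureD //; last exact: PXlt.
  set rhs := (X in _ = X).
  suff e : (Pr (D `&` E1) + (Pr G - Pr (G `&` E1)))%E = rhs by exact: e.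
  rewrite /rhs.
  rewrite hD hG (split1 D mD) (split1 G mG).
  rewrite -(fineK (I1fin D mD)) -(fineK (Ifin D mD)) -(fineK (I1fin G mG)) -(fineK (Ifin G mG)).
  rewrite -!EFinN -!EFinD; congr EFin; ring.
have KLc := @KL R d Omega Pr Q mQ Q01 f mf f_ge0 c c0 cpos.
have I01m : measurable (`[0%R, 1%R]%classic : set R) by exact: measurable_itv.
have IG s : 0 <= s <= 1 ->
   (\int[Pr]_(w in Q @^-1` `]-oo, s]%classic) (c / f (Q w))%:E)%E = (c * s)%:E.
  move=> /andP[s0 s1].
  rewrite (KLc _ (mpre Q mQ _ (measurable_itv _)) (fun q => (\1_(`]-oo, s]%classic) q)%:E)); first last.
  - move=> A mA; rewrite -preimage_setI Qdens; last exact: measurableI.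
    rewrite setIAC integral_mkcondr; apply: eq_integral => q _.
    by rewrite epatch_indic.
  - by apply/measurable_EFinP; exact: measurable_indic.
  - by [].
  - by move=> q; rewrite lee_fin.
  rewrite integral_indic //.
  have -> : `]-oo, s]%classic `&` `[0%R, 1%R]%classic = `[0%R, s]%classic :> set R.
    apply/seteqP; split => x /=; rewrite !in_itv /=.
      by move=> [xs /andP[x0 x1]]; rewrite x0 xs.
    by move=> /andP[x0 xs]; rewrite x0 xs (le_trans xs s1).
  transitivity (c%:E * s%:E)%E; last by [].
  by apply: congr1; exact: leb0s.
have Iall : (\int[Pr]_(w in setT) (c / f (Q w))%:E)%E = c%:E.
  rewrite (KLc _ measurableT (fun q => 1%E)); first last.
  - move=> A mA; rewrite setIT Qdens //.
    by apply: eq_integral => q _; rewrite mule1.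
  - exact: measurable_cst.
  - by [].
  - by [].
  have := @integral_cst _ _ R lebesgue_measure _ I01m 1%E.
  rewrite /cst => ->; rewrite mul1e -[X in _ = X]mule1; apply: congr1; exact: leb0s.
have c1 : c <= 1.
  rewrite -lee_fin -Iall -(probability_setT Pr) [leRHS](split1 setT measurableT).
  by rewrite lee_paddl.
have kle1 (q : R) (B : set R) : measurable B -> (kappa q B <= 1)%E.
  move=> mB; rewrite -(prob_kernel (s:=kappa) q); apply: le_measure => //; rewrite inE //.
have ID1 s : (\int[Pr]_(w in P @^-1` `]-oo, s]%classic) (c / f (Q w))%:E)%E =
   (c%:E * \int[lebesgue_measure]_(q in `[0%R, 1%R]) kappa q `]-oo, s]%classic)%E.
  rewrite (KLc _ (mpre P mP _ (measurable_itv _)) (fun q => kappa q `]-oo, s]%classic)) //.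
  - by move=> q; rewrite ge0_fin_numE // (le_lt_trans (kle1 _ _ (measurable_itv _))) // ltey.
  - exact: measurable_kernel.
  - by move=> A mA; rewrite Hcond //; exact: measurable_itv.
have Kfin s : (\int[lebesgue_measure]_(q in `[0%R, 1%R]) kappa q `]-oo, s]%classic)%E \is a fin_num.
  rewrite ge0_fin_numE; last by apply: integral_ge0.
  apply: (@le_lt_trans _ _ (\int[lebesgue_measure]_(q in `[0%R, 1%R]) (cst 1%E) q)%E).
    apply: ge0_le_integral => //.
    - apply: (measurable_funS measurableT) => //; exact: (measurable_kernel kappa _ (measurable_itv _)).
    - by move=> q _; exact: kle1 (measurable_itv _).
  rewrite integral_cst // mul1e.
  apply: (@le_lt_trans _ _ 1%E); last exact: ltey.
  by rewrite le_eqVlt; apply/orP; left; apply/eqP; exact: leb0s.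
have pleE s : prob_le Pr P s = Pr (P @^-1` `]-oo, s]%classic).
  by rewrite /prob_le; congr (Pr _); apply/seteqP; split => w /=; rewrite in_itv.
have PDfin s : Pr (P @^-1` `]-oo, s]%classic) \is a fin_num.
  by apply: PXfin; apply: mpre => //; exact: measurable_itv.
split.
  move=> s s01; rewrite key IG // ID1 pleE.
  rewrite -(fineK (Kfin s)) -(fineK (PDfin s)).
  rewrite -!EFinM -!EFinN -!EFinD; congr EFin; rewrite /c; ring.
have ID2 : indep_rv Pr P Q -> forall s,
  (\int[Pr]_(w in P @^-1` `]-oo, s]%classic) (c / f (Q w))%:E)%E =
   (c%:E * Pr (P @^-1` `]-oo, s]%classic))%E.
  move=> ind s.
  rewrite (KLc _ (mpre P mP _ (measurable_itv _)) (fun q => Pr (P @^-1` `]-oo, s]%classic))) //.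
  - have := @integral_cst _ _ R lebesgue_measure _ I01m (Pr (P @^-1` `]-oo, s]%classic)).
    rewrite /cst => ->; congr (_ * _)%E.
    by rewrite -[X in _ = X]mule1; apply: congr1; exact: leb0s.
  - move=> A mA; rewrite setIC (ind _ _ (measurable_itv _) mA).
    rewrite Qdens // muleC ge0_integralZr //.
    + exact: measurableI.
    + by apply/measurable_EFinP; exact: measurable_funS mf.
    + by move=> q [_]; rewrite /= in_itv /= => q01; rewrite lee_fin f_ge0.
have final : indep_rv Pr P Q -> forall s, 0 <= s <= 1 ->
   prob_le Pr (ptilde_density T P Q) s =
   ((1 - c) * fine (Pr (P @^-1` `]-oo, s]%classic)) + c * s)%:E.
  move=> ind s s01; rewrite key IG // ID2 //.
  rewrite -(fineK (PDfin s)) -!EFinM -!EFinN -!EFinD fineK //; congr EFin; ring.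
split.
  move=> ind s s01; rewrite final // lee_fin.
  have := HPvalid s s01; rewrite pleE -(fineK (PDfin s)) lee_fin => Fs.
  have [s0 s1] := andP s01.
  have F0 : 0 <= fine (Pr (P @^-1` `]-oo, s]%classic)).
    by rewrite fine_ge0 // measure_ge0.
  nra.
move=> ind U s s01; rewrite final //.
have := U s s01; rewrite pleE => ->; rewrite /=; congr EFin; ring.
Qed.
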